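(* Let $L$ be an even positive integer and $N\ge 1$ an integer. Consider the logarithmic Bethe equations $$\frac{1}{\pi}\arctan \lambda_k=\frac{I_k}{L}-\frac{1}{\pi L}\sum_{l=1}^N \arctan(\lambda_k-\lambda_l),\qquad k=1,\dots,N,$$ for unknowns $\lambda_1,\dots,\lambda_N$, where the Bethe numbers $I_k$ are integers if $N$ is odd and half-integers if $N$ is even. Then the solutions $(\lambda_1,\dots,\lambda_N)$ of these equations with $\lambda_k\neq\lambda_l$ for $k\neq l$ are all real, and they are characterized (in one-to-one correspondence) by the choice of $N$ distinct (half-)integers $I_1,\dots,I_N$ satisfying $$-\frac{L+N-1}{2}< I_k < \frac{L+N-1}{2}.$$
   Context: These are the logarithmic form of the Bethe equations $\left(\frac{\lambda_k-i}{\lambda_k+i}\right)^L=\prod_{l\neq k}\frac{\lambda_k-\lambda_l+i}{\lambda_k-\lambda_l-i}$ of the non-compact spin $s=-1$ Heisenberg chain; $\arctan$ denotes the principal branch. *)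

(* Defs.v *)
From HB Require Import structures.
From mathcomp Require Import all_boot all_order all_algebra.
From mathcomp Require Import all_classical all_reals all_analysis.
From mathcomp.real_closed Require Import complex.
Set Implicit Arguments. Unset Strict Implicit. Unset Printing Implicit Defensive.
Import Order.TTheory GRing.Theory Num.Theory.
Local Open Scope ring_scope.

(* Bethe equations of the non-compact spin s = -1 chain, multiplicative form
   with denominators cleared:
   (l_k - i)^L prod_{l<>k} (l_k - l_l - i) = (l_k + i)^L prod_{l<>k} (l_k - l_l + i). *)
Definition bethe_eqs (R : realType) (L N : nat) (lam : 'I_N -> R[i]) : Prop :=
  forall k : 'I_N,
    (lam k - 'i) ^+ L * \prod_(l < N | l != k) (lam k - lam l - 'i)
    = (lam k + 'i) ^+ L * \prod_(l < N | l != k) (lam k - lam l + 'i).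

Definition log_bethe_eqs (R : realType) (L N : nat) (lam : 'I_N -> R)
    (I : 'I_N -> R) : Prop :=
  forall k : 'I_N,
    pi^-1 * atan (lam k)
    = I k / L%:R - (pi * L%:R)^-1 * \sum_(l < N) atan (lam k - lam l).

Definition bethe_number (R : realType) (N : nat) (x : R) : Prop :=
  if odd N then exists z : int, x = z%:~R
  else exists z : int, x = z%:~R + 2^-1.

(* Main.v *)
Require Import Defs.
From HB Require Import structures.
From mathcomp Require Import all_boot all_order all_algebra.
From mathcomp Require Import all_classical all_reals all_analysis.
From mathcomp.real_closed Require Import complex.
From mathcomp Require Import ring lra zify.
Import Order.TTheory GRing.Theory Num.Theory.
Import numFieldNormedType.Exports.
Local Open Scope ring_scope.
Definition Gf {R : realType} {N : nat} (L : nat) (k : 'I_N) (t : R) (x : 'I_N -> R) : R :=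
  L%:R / pi * atan t + pi^-1 * \sum_(l < N | l != k) atan (t - x l).

Lemma sum_all_G (R : realType) (N : nat) (k : 'I_N) (x : 'I_N -> R) :
  \sum_(l < N) atan (x k - x l) = \sum_(l < N | l != k) atan (x k - x l).
Proof. by rewrite (bigD1 k) //= subrr atan0 add0r. Qed.

Lemma log_bethe_G {R : realType} {L N : nat} (hL : (0 < L)%N) {lam I : 'I_N -> R} :
  log_bethe_eqs L lam I <-> forall k, Gf L k (lam k) lam = I k.
Proof.
have pi0 : (pi : R) != 0 by rewrite gt_eqF // pi_gt0.
have L0 : (L%:R : R) != 0 by rewrite pnatr_eq0 -lt0n.
rewrite /log_bethe_eqs /Gf; move: (pi : R) pi0 => p pi0.
split=> h k; move: (h k); rewrite -sum_all_G => e.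
  have e' : I k / L%:R = p^-1 * atan (lam k) +
     (p * L%:R)^-1 * \sum_(l < N) atan (lam k - lam l) by rewrite e; ring.
  rewrite (_ : I k = L%:R * (I k / L%:R)); last by field.
  by rewrite e'; field; rewrite L0 pi0.
by rewrite -e; field; rewrite L0 pi0.
Qed.

Lemma Lpi_gt0 (R : realType) (L : nat) : (0 < L)%N -> 0 < (L%:R : R) / pi.
Proof. by move=> hL; rewrite divr_gt0 ?pi_gt0 // ltr0n. Qed.

Lemma G_lt_t {R : realType} {L N : nat} (hL : (0 < L)%N) (k : 'I_N) (t t' : R) x :
  t < t' -> Gf L k t x < Gf L k t' x.
Proof.
move=> tt; rewrite /Gf; apply: ltr_leD.
  by rewrite ltr_pM2l ?Lpi_gt0 // lt_atan.
rewrite ler_wpM2l // ?invr_ge0 ?(ltW (pi_gt0 R)) //.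
by apply: ler_sum => l _; apply: le_atan; rewrite lerD2r ltW.
Qed.

Lemma G_le_t (R : realType) (L N : nat) (hL : (0 < L)%N) (k : 'I_N) (t t' : R) x :
  t <= t' -> Gf L k t x <= Gf L k t' x.
Proof.
by rewrite le_eqVlt => /orP[/eqP->//|lt]; apply/ltW/G_lt_t.
Qed.

Lemma G_le_x (R : realType) (L N : nat) (k : 'I_N) (t : R) x y :
  (forall l, x l <= y l) -> Gf L k t y <= Gf L k t x.
Proof.
move=> hxy; rewrite /Gf lerD2l ler_wpM2l // ?invr_ge0 ?(ltW (pi_gt0 R)) //.
by apply: ler_sum => l _; apply: le_atan; rewrite lerD2l lerN2.
Qed.

Lemma G_full (R : realType) (L N : nat) (k : 'I_N) (x : 'I_N -> R) :
  Gf L k (x k) x = L%:R / pi * atan (x k) + pi^-1 * \sum_(l < N) atan (x k - x l).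
Proof. by rewrite /Gf sum_all_G. Qed.

Lemma F_lt {R : realType} {L N : nat} (hL : (0 < L)%N) {j k : 'I_N} {x : 'I_N -> R} :
  x j < x k -> Gf L j (x j) x < Gf L k (x k) x.
Proof.
move=> hjk; rewrite !G_full; apply: ltr_leD.
  by rewrite ltr_pM2l ?Lpi_gt0 // lt_atan.
rewrite ler_wpM2l // ?invr_ge0 ?(ltW (pi_gt0 R)) //.
by apply: ler_sum => l _; apply: le_atan; rewrite lerD2r ltW.
Qed.

Lemma sum_cont (R : realType) (N : nat) (P : pred 'I_N) (g : 'I_N -> R -> R) :
  (forall l, continuous (g l)) -> continuous (fun t => \sum_(l < N | P l) g l t).
Proof.
move=> hg; rewrite /index_enum; elim: (Finite.enum _) => [|l r IH].
  have -> : (fun t : R => \sum_(l <- [::] | P l) g l t) = fun=> 0.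
    by apply: funext => t; rewrite big_nil.
  by move=> t; apply: cvg_cst.
have -> : (fun t : R => \sum_(j <- l :: r | P j) g j t) =
   (fun t => (if P l then g l t else 0) + \sum_(j <- r | P j) g j t).
  by apply: funext => t; rewrite big_cons; case: (P l); rewrite ?add0r.
move=> t; apply: cvgD; last exact: IH.
by case: (P l); [exact: hg | apply: cvg_cst].
Qed.

Lemma G_cont (R : realType) (L N : nat) (k : 'I_N) (x : 'I_N -> R) :
  continuous (fun t => Gf L k t x).
Proof.
move=> t; rewrite /Gf; apply: cvgD.
  apply: cvgM; first by apply: cvg_cst.
  exact: continuous_atan.
apply: cvgM; first by apply: cvg_cst.
apply: sum_cont => l s.
apply: continuous_comp; last exact: continuous_atan.
by apply: cvgB; [apply: cvg_id | apply: cvg_cst].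
Qed.
Lemma count_between (T : finType) (v : T -> nat) (P : pred T) (m n : nat) :
  injective v -> (forall x, P x -> m <= v x < n)%N -> (#|P| <= n - m)%N.
Proof.
move=> hinj hP; rewrite cardE -(size_map v) -(size_iota m (n - m)).
apply: uniq_leq_size; first by rewrite map_inj_uniq // enum_uniq.
move=> y /mapP[x]; rewrite mem_enum => /hP /andP[h1 h2] ->.
by rewrite mem_iota h1 subnKC // (leq_trans h1 (ltnW h2)).
Qed.

Lemma sum_ind (R : realType) (N : nat) (k : 'I_N) (P : pred 'I_N) (c d : R) :
  (0 < N)%N ->
  \sum_(l < N | l != k) (c + d * (P l)%:R) =
  c * (N%:R - 1) + d * (#|[pred l | (l != k) && P l]|)%:R.
Proof.
move=> hN; rewrite big_split /= sumr_const.
have hc : #|(fun i : 'I_N => i != k)| = N.-1.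
  have := cardC1 k; rewrite card_ord => <-; by apply: eq_card => i; rewrite !inE.
rewrite hc.
have eN : (N%:R - 1 : R) = (N.-1)%:R by rewrite -{1}(prednK hN) -natr1 addrK.
rewrite eN mulr_natr -mulr_sumr -natr_sum.
congr (_ + d * _%:R).
rewrite -sum1_card [RHS]big_mkcond [LHS]big_mkcond /=.
by apply: eq_bigr => l _; rewrite !inE; case: (l != k); case: (P l).
Qed.

Lemma sub_bound {R : realType} {L N : nat} (hL : (0 < L)%N) (hN : (0 < N)%N)
    {v : 'I_N -> nat} (hinj : injective v) (hv1 : forall l, (1 <= v l)%N)
    (hv2 : forall l, (v l)%:R + 2 <= L%:R + N%:R :> R) {D : R} (hD1 : 1 <= D)
    (hDn : forall y, y <= - D -> atan y <= - (pi * (2^-1 - ((L + N)%:R)^-1))) {k : 'I_N} :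
  Gf L k (D * ((v k)%:R - (L + N)%:R))
         (fun l => D * ((v l)%:R - (L + N)%:R)) <= (v k)%:R - (L + N - 1)%:R / 2.
Proof.
set e : R := ((L + N)%:R)^-1.
set th := pi * (2^-1 - e).
set a := fun l => D * ((v l)%:R - (L + N)%:R).
have pi0 : (0 : R) < pi := pi_gt0 R.
have LN0 : (0 : R) < (L + N)%:R by rewrite ltr0n addn_gt0 hL.
have ee : e * (L%:R + N%:R) = 1 by rewrite /e -natrD mulVf // gt_eqF.
have e0 : 0 <= e by rewrite /e invr_ge0 ltW.
have hA : atan (a k) <= - th.
  apply: hDn; rewrite /a natrD; have := hv2 k; nra.
have hT : forall l, l != k ->
    atan (a k - a l) <= - th + (pi / 2 + th) * (v l < v k)%:R.
  move=> l lk; case: (ltnP (v l) (v k)) => h /=.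
    by rewrite mulr1; have := atan_ltpi2 (a k - a l); lra.
  have h' : (v k + 1 <= v l)%N.
    rewrite addn1 ltn_neqAle h andbT; apply/eqP => /hinj e'.
    by move: lk; rewrite e' eqxx.
  rewrite mulr0 addr0; apply: hDn; rewrite /a.
  have : ((v k)%:R + 1 <= (v l)%:R :> R) by rewrite natr1 ler_nat -addn1.
  nra.
have hS : \sum_(l < N | l != k) atan (a k - a l) <=
    - th * (N%:R - 1) + (pi / 2 + th) *
      (#|[pred l | (l != k) && (v l < v k)%N]|)%:R.
  by rewrite -sum_ind //; apply: ler_sum => l lk; apply: hT.
have hc : (#|[pred l | (l != k) && (v l < v k)%N]| <= v k - 1)%N.
  apply: (@count_between _ v) => // l /= /andP[_ h]; by rewrite hv1 h.
have hcR : ((#|[pred l | (l != k) && (v l < v k)%N]|)%:R + 1 <= (v k)%:R :> R).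
  rewrite natr1 ler_nat; apply: (leq_ltn_trans hc); rewrite subn1 ltn_predL; exact: hv1.
move: hS hcR; set cb := (#|_|)%:R => hS hcR.
have cb0 : 0 <= cb by rewrite /cb ler0n.
rewrite /Gf -/(a k).
have h1 : L%:R / pi * atan (a k) <= - L%:R * (2^-1 - e).
  apply: le_trans (_ : L%:R / pi * (- th) <= _).
    by rewrite ler_wpM2l // ltW // Lpi_gt0.
  have E : forall p : R, p != 0 -> L%:R / p * (- (p * (2^-1 - e))) = - L%:R * (2^-1 - e).
    by move=> p p0; field.
  by rewrite /th E // gt_eqF.
have h2 : pi^-1 * \sum_(l < N | l != k) atan (a k - a l) <=
          - (2^-1 - e) * (N%:R - 1) + (1 - e) * cb.
  apply: le_trans (_ : pi^-1 * (- th * (N%:R - 1) + (pi / 2 + th) * cb) <= _).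
    by rewrite ler_wpM2l // invr_ge0 ltW.
  have E : forall p : R, p != 0 -> p^-1 * (- (p * (2^-1 - e)) * (N%:R - 1) +
     (p / 2 + p * (2^-1 - e)) * cb) = - (2^-1 - e) * (N%:R - 1) + (1 - e) * cb.
    by move=> p p0; field.
  by rewrite /th E // gt_eqF.
have hLN : ((L + N - 1)%:R : R) = L%:R + N%:R - 1.
  by rewrite natrB ?natrD // addn_gt0 hL.
rewrite hLN.
have ecb : 0 <= e * cb by rewrite mulr_ge0.
lra.
Qed.

Lemma sup_bound {R : realType} {L N : nat} (hL : (0 < L)%N) (hN : (0 < N)%N)
    {v : 'I_N -> nat} (hinj : injective v)
    (hv2 : forall l, (v l)%:R + 2 <= L%:R + N%:R :> R) {D : R} (hD1 : 1 <= D)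
    (hDp : forall y, D <= y -> pi * (2^-1 - ((L + N)%:R)^-1) <= atan y) {k : 'I_N} :
  (v k)%:R - (L + N - 1)%:R / 2 <=
  Gf L k (D * ((v k)%:R + 1)) (fun l => D * ((v l)%:R + 1)).
Proof.
set e : R := ((L + N)%:R)^-1.
set th := pi * (2^-1 - e).
set b := fun l => D * ((v l)%:R + 1).
have pi0 : (0 : R) < pi := pi_gt0 R.
have LN0 : (0 : R) < (L + N)%:R by rewrite ltr0n addn_gt0 hL.
have ee : e * (L%:R + N%:R) = 1 by rewrite /e -natrD mulVf // gt_eqF.
have e0 : 0 <= e by rewrite /e invr_ge0 ltW.
have hB : th <= atan (b k).
  apply: hDp; rewrite /b; have : (0 : R) <= (v k)%:R by rewrite ler0n.
  nra.
have hT : forall l, l != k ->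
    th + (- (pi / 2 + th)) * (v k < v l)%:R <= atan (b k - b l).
  move=> l lk; case: (ltnP (v k) (v l)) => h /=.
    by rewrite mulr1; have := atan_gtNpi2 (b k - b l); lra.
  have h' : (v l + 1 <= v k)%N.
    rewrite addn1 ltn_neqAle h andbT; apply/eqP => /hinj e'.
    by move: lk; rewrite e' eqxx.
  rewrite mulr0 addr0; apply: hDp; rewrite /b.
  have : ((v l)%:R + 1 <= (v k)%:R :> R) by rewrite natr1 ler_nat -addn1.
  nra.
have hS : th * (N%:R - 1) + (- (pi / 2 + th)) *
      (#|[pred l | (l != k) && (v k < v l)%N]|)%:R <=
      \sum_(l < N | l != k) atan (b k - b l).
  by rewrite -sum_ind //; apply: ler_sum => l lk; apply: hT.
have hv2n : forall l, (v l + 2 <= L + N)%N.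
  by move=> l; rewrite -(ler_nat R) !natrD; exact: hv2.
have hc : (#|[pred l | (l != k) && (v k < v l)%N]| <= (L + N - 1) - (v k + 1))%N.
  apply: (@count_between _ v) => // l /= /andP[_ h].
  by rewrite addn1 h /=; have := hv2n l; lia.
have hcR : ((#|[pred l | (l != k) && (v k < v l)%N]|)%:R + (v k)%:R + 2
             <= L%:R + N%:R :> R).
  move: hc; set ca := #|_| => hc.
  rewrite -!natrD ler_nat; have := hv2n k; lia.
move: hS hcR; set ca := (#|_|)%:R => hS hcR.
have ca0 : 0 <= ca by rewrite /ca ler0n.
rewrite /Gf -/(b k).
have h1 : L%:R * (2^-1 - e) <= L%:R / pi * atan (b k).
  apply: le_trans (_ : L%:R / pi * th <= _); last first.
    by rewrite ler_wpM2l // ltW // Lpi_gt0.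
  have E : forall p : R, p != 0 -> L%:R / p * (p * (2^-1 - e)) = L%:R * (2^-1 - e).
    by move=> p p0; field.
  by rewrite /th E ?gt_eqF.
have h2 : (2^-1 - e) * (N%:R - 1) - (1 - e) * ca <=
          pi^-1 * \sum_(l < N | l != k) atan (b k - b l).
  apply: le_trans (_ : pi^-1 * (th * (N%:R - 1) + (- (pi / 2 + th)) * ca) <= _); last first.
    by rewrite ler_wpM2l // invr_ge0 ltW.
  have E : forall p : R, p != 0 -> p^-1 * ((p * (2^-1 - e)) * (N%:R - 1) +
     (- (p / 2 + p * (2^-1 - e))) * ca) = (2^-1 - e) * (N%:R - 1) - (1 - e) * ca.
    by move=> p p0; field.
  by rewrite /th E // gt_eqF.
have hLN : ((L + N - 1)%:R : R) = L%:R + N%:R - 1.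
  by rewrite natrB ?natrD // addn_gt0 hL.
rewrite hLN.
have eca : 0 <= e * ca by rewrite mulr_ge0.
lra.
Qed.

Lemma sum_const_ne (R : realType) (N : nat) (k : 'I_N) (c : R) : (0 < N)%N ->
  \sum_(l < N | l != k) c = c * (N%:R - 1).
Proof.
move=> hN.
rewrite (_ : \sum_(l < N | l != k) c = \sum_(l < N | l != k) (c + 0 * ((xpred0 : pred 'I_N) l)%:R)).
  by rewrite sum_ind // mul0r addr0.
by apply: eq_bigr => l _; rewrite mul0r addr0.
Qed.

Lemma F_le {R : realType} {L N : nat} (hL : (0 < L)%N) {x y : 'I_N -> R} :
  (forall k, Gf L k (x k) x = Gf L k (y k) y) -> forall k, x k <= y k.
Proof.
move=> he k.
case: (arg_maxP (fun i => x i - y i) (isT : xpredT k)) => m _ hm.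
rewrite -subr_le0; apply: le_trans (hm k isT) _.
rewrite leNgt; apply/negP => hpos.
have : Gf L m (y m) y < Gf L m (x m) x.
  rewrite !G_full; apply: ltr_leD.
    by rewrite ltr_pM2l ?Lpi_gt0 // lt_atan // -subr_gt0.
  rewrite ler_wpM2l // ?invr_ge0 ?(ltW (pi_gt0 R)) //.
  apply: ler_sum => l _; apply: le_atan.
  have := hm l isT; rewrite /= => h; lra.
by rewrite he ltxx.
Qed.

Lemma F_unique {R : realType} {L N : nat} (hL : (0 < L)%N) {x y : 'I_N -> R} :
  (forall k, Gf L k (x k) x = Gf L k (y k) y) -> x = y.
Proof.
move=> he; apply: funext => k; apply: le_anti.
by rewrite (F_le hL he) (F_le hL (fun k => esym (he k))).
Qed.

Lemma part2 {R : realType} {L N : nat} (hL : (0 < L)%N) (hN : (0 < N)%N)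
    {lam I : 'I_N -> R} :
  injective lam -> log_bethe_eqs L lam I ->
  injective I /\
  (forall k, - ((L + N - 1)%:R / 2) < I k /\ I k < (L + N - 1)%:R / 2).
Proof.
move=> hinj /(log_bethe_G hL) hG; split.
  move=> j k; rewrite -!hG => e; apply: hinj.
  case: (ltgtP (lam j) (lam k)) => // h.
    by move: (F_lt hL h); rewrite e ltxx.
  by move: (F_lt hL h); rewrite e ltxx.
move=> k; rewrite -hG /Gf.
have pi0 : (0 : R) < pi := pi_gt0 R.
have hLN : ((L + N - 1)%:R : R) = L%:R + N%:R - 1.
  by rewrite natrB ?natrD // addn_gt0 hL.
have LR : (0 : R) < L%:R by rewrite ltr0n.
have NR : (1 : R) <= N%:R by rewrite ler1n.
have s1 : \sum_(l < N | l != k) atan (lam k - lam l) <= pi / 2 * (N%:R - 1).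
  rewrite -(@sum_const_ne _ _ k) //; apply: ler_sum => l _; exact/ltW/atan_ltpi2.
have s2 : - (pi / 2) * (N%:R - 1) <= \sum_(l < N | l != k) atan (lam k - lam l).
  rewrite -(@sum_const_ne _ _ k) //; apply: ler_sum => l _; exact/ltW/atan_gtNpi2.
move: s1 s2; set S := \sum_(_ < _ | _) _ => s1 s2.
have a1 := atan_ltpi2 (lam k); have a2 := atan_gtNpi2 (lam k).
move: (atan (lam k)) a1 a2 => A a1 a2.
have p0 : (pi : R) != 0 by rewrite gt_eqF.
have E1 : forall p : R, p != 0 -> L%:R / p * (p / 2) = L%:R / 2 by move=> p ?; field.
have E2 : forall p : R, p != 0 -> p^-1 * (p / 2 * (N%:R - 1)) = (N%:R - 1) / 2.
  by move=> p ?; field.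
have t1 : L%:R / pi * A < L%:R / 2.
  by rewrite -(E1 _ p0) ltr_pM2l ?Lpi_gt0.
have t2 : - (L%:R / 2) < L%:R / pi * A.
  by rewrite -(E1 _ p0) -mulrN ltr_pM2l ?Lpi_gt0 // -mulNr.
have t3 : pi^-1 * S <= (N%:R - 1) / 2.
  by rewrite -(E2 _ p0) ler_pM2l ?invr_gt0.
have t4 : - ((N%:R - 1) / 2) <= pi^-1 * S.
  by rewrite -(E2 _ p0) -mulrN ler_pM2l ?invr_gt0 // -mulNr.
rewrite hLN; split; lra.
Qed.




Lemma int_nat {R : realType} {w : int} {x : R} :
  x = w%:~R -> 0 < x -> exists n : nat, x = n%:R /\ (0 < n)%N.
Proof.
move=> ->; rewrite ltr0z; case: w => // n h; by exists n.
Qed.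

Lemma bethe_nat {R : realType} {L N : nat} (hLe : ~~ odd L) (hN : (0 < N)%N) {x : R} :
  bethe_number N x -> - ((L + N - 1)%:R / 2) < x ->
  exists n : nat, x = n%:R - (L + N - 1)%:R / 2 /\ (0 < n)%N.
Proof.
move=> hb hlo.
have eL := odd_double_half L; rewrite (negbTE hLe) add0n in eL.
have eN := odd_double_half N.
rewrite /bethe_number in hb.
have hpos : 0 < x + (L + N - 1)%:R / 2 by rewrite -ltrBlDr sub0r.
suff [w hw] : exists w : int, x + (L + N - 1)%:R / 2 = w%:~R.
  have [n [hn npos]] := int_nat hw hpos.
  by exists n; split => //; rewrite -hn addrK.
have hR : ((L + N - 1)%:R : R) = 2 * (L./2)%:R + N%:R - 1.
  rewrite natrB; last by rewrite addn_gt0 hN orbT.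
  by rewrite natrD -{1}eL -muln2 natrM mulrC.
rewrite hR.
have PZ : forall n : nat, (n%:Z)%:~R = n%:R :> R by [].
case: (odd N) hb eN => [[z ->]|[z ->]] eN; rewrite -eN ?add0n ?add1n.
  exists (z + (L./2)%:Z + (N./2)%:Z).
  by rewrite !intrD /= !PZ -(addn1 (N./2.*2)) natrD -muln2 natrM; field.
exists (z + (L./2)%:Z + (N./2)%:Z).
by rewrite !intrD /= !PZ -muln2 natrM; field.
Qed.

Lemma tarski_exists (R : realType) (N : nat) (G : 'I_N -> R -> ('I_N -> R) -> R)
    (c a b : 'I_N -> R) :
  (forall k t t' x, t < t' -> G k t x < G k t' x) ->
  (forall k t x y, (forall l, x l <= y l) -> G k t y <= G k t x) ->
  (forall k x, continuous (fun t => G k t x)) ->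
  (forall l, a l <= b l) ->
  (forall k, G k (a k) a <= c k) -> (forall k, c k <= G k (b k) b) ->
  exists x, forall k, G k (x k) x = c k.
Proof.
move=> Glt Gx Gc hab ha hb.
have Gle : forall k t t' x, t <= t' -> G k t x <= G k t' x.
  move=> k t t' x; rewrite le_eqVlt => /orP[/eqP->//|/Glt h]; exact/ltW/h.
have Gle' : forall k t t' x, G k t x <= G k t' x -> t <= t'.
  move=> k t t' x h; rewrite leNgt; apply/negP => /(Glt k _ _ x) h'.
  by move: (lt_le_trans h' h); rewrite ltxx.
pose A := [set x : 'I_N -> R | (forall l, a l <= x l <= b l) /\
                               (forall l, G l (x l) x <= c l)]%classic.
pose E k := [set y | exists2 x, A x & x k = y]%classic.
pose xs k := sup (E k).
have Aa : A a by split => // l; rewrite lexx hab.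
have hE : forall k, has_sup (E k).
  move=> k; split; first by exists (a k); exists a.
  by exists (b k) => y [x [hx _] <-]; case/andP: (hx k).
have hub : forall x, A x -> forall k, x k <= xs k.
  by move=> x Ax k; apply: (sup_upper_bound (hE k)); exists x.
have hsb : forall k, xs k <= b k.
  move=> k; apply: ge_sup; first by exists (a k); exists a.
  by move=> y [x [hx _] <-]; case/andP: (hx k).
have hsa : forall k, a k <= xs k by move=> k; exact: hub.
have C1 : forall k, G k (xs k) xs <= c k.
  move=> k; case: (leP (G k (xs k) xs) (c k)) => // hlt.
  have fa : G k (a k) xs <= c k by apply: le_trans (ha k); apply: Gx.
  have [t0 ht0 ft0] : exists2 t0, t0 \in `[a k, xs k] & G k t0 xs = c k.
    apply: (@IVT _ (fun t => G k t xs)); first exact: hsa.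
      exact: continuous_subspaceT.
    by rewrite ge_min fa le_max (ltW hlt) orbT.
  have ub : ubound (E k) t0.
    move=> y [x [hx1 hx2] <-]; apply: (Gle' k _ _ xs); rewrite ft0.
    by apply: le_trans (hx2 k); apply: Gx => l; apply: hub.
  have := ge_sup (ex_intro _ (a k) (ex_intro2 _ _ a Aa erefl)) ub.
  by move/(Gle k _ _ xs); rewrite ft0 => h; move: (lt_le_trans hlt h); rewrite ltxx.
have As : A xs by split => // l; rewrite hsa hsb.
have C2 : forall k, c k <= G k (xs k) xs.
  move=> k; case: (leP (c k) (G k (xs k) xs)) => // hlt.
  have fb : c k <= G k (b k) xs by apply: le_trans (hb k) _; apply: Gx.
  have [t0 ht0 ft0] : exists2 t0, t0 \in `[xs k, b k] & G k t0 xs = c k.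
    apply: (@IVT _ (fun t => G k t xs)); first exact: hsb.
      exact: continuous_subspaceT.
    by rewrite ge_min (ltW hlt) le_max fb orbT.
  move: ht0; rewrite in_itv /= => /andP[t1 t2].
  pose x' l := if l == k then t0 else xs l.
  have hx' : forall l, xs l <= x' l.
    by move=> l; rewrite /x'; case: eqP => [->|]. 
  have Ax' : A x'.
    split=> l; rewrite /x'; case: eqP => [->|_].
    - by rewrite t2 (le_trans (hsa k) t1).
    - by rewrite hsa hsb.
    - by rewrite -ft0; apply: Gx.
    - by apply: le_trans (C1 l); apply: Gx.
  have := hub _ Ax' k; rewrite /x' eqxx => h.
  have e : t0 = xs k by apply: le_anti; rewrite h t1.
  by move: hlt; rewrite -e ft0 ltxx.
by exists xs => k; apply: le_anti; rewrite C1 C2.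
Qed.


Lemma atan_big {R : realType} {e : R} : 0 < e -> e < 1 ->
  exists D : R, 1 <= D /\ (forall y, D <= y -> pi * (2^-1 - e) <= atan y) /\
                (forall y, y <= - D -> atan y <= - (pi * (2^-1 - e))).
Proof.
move=> e0 e1; set th := pi * (2^-1 - e).
have pi0 : (0 : R) < pi := pi_gt0 R.
have thi : th \in `](- (pi / 2)), (pi / 2)[.
  rewrite in_itv /= /th; apply/andP; split.
    nra.
  nra.
exists (Num.max 1 (tan th)); split; first by rewrite le_max lexx.
have hD : forall y, Num.max 1 (tan th) <= y -> th <= atan y.
  move=> y hy; rewrite -{1}(tanK thi); apply: le_atan.
  by apply: le_trans hy; rewrite le_max lexx orbT.
split => // y hy; rewrite -(opprK y) atanN lerN2; apply: hD.
by rewrite lerNr.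
Qed.

Definition n2 {R : realType} (z : R[i]) : R := (complex.Re z) ^+ 2 + (complex.Im z) ^+ 2.

Lemma n2M (R : realType) (x y : R[i]) : n2 (x * y) = n2 x * n2 y.
Proof. by case: x => a b; case: y => c d; rewrite /n2 /=; ring. Qed.

Lemma n21 (R : realType) : n2 (1 : R[i]) = 1.
Proof. by rewrite /n2 /=; ring. Qed.

Lemma n2_ge0 (R : realType) (z : R[i]) : 0 <= n2 z.
Proof. by rewrite /n2 addr_ge0 // sqr_ge0. Qed.

Lemma n2X (R : realType) (z : R[i]) n : n2 (z ^+ n) = n2 z ^+ n.
Proof. by elim: n => [|n IH]; rewrite ?expr0 ?n21 // !exprS n2M IH. Qed.

Lemma n2_prod (R : realType) (N : nat) (P : pred 'I_N) (f : 'I_N -> R[i]) :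
  n2 (\prod_(l < N | P l) f l) = \prod_(l < N | P l) n2 (f l).
Proof. exact: (big_morph n2 (n2M R) (n21 R)). Qed.

Lemma n2_plus (R : realType) (z : R[i]) : n2 (z + 'i%C) = (complex.Re z) ^+ 2 + (complex.Im z + 1) ^+ 2.
Proof. by case: z => a b; rewrite /n2 /=; ring. Qed.

Lemma n2_minus (R : realType) (z : R[i]) : n2 (z - 'i%C) = (complex.Re z) ^+ 2 + (complex.Im z - 1) ^+ 2.
Proof. by case: z => a b; rewrite /n2 /=; ring. Qed.

Lemma ImB (R : realType) (x y : R[i]) : complex.Im (x - y) = complex.Im x - complex.Im y.
Proof. by case: x => a b; case: y => c d /=. Qed.

Lemma im_le0 {R : realType} {L N : nat} (hL : (0 < L)%N) {lam : 'I_N -> R[i]} :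
  bethe_eqs L lam -> forall k, complex.Im (lam k) <= 0.
Proof.
move=> h k.
case: (arg_maxP (fun i => complex.Im (lam i)) (isT : xpredT k)) => m _ hm.
apply: le_trans (hm k isT) _.
rewrite leNgt; apply/negP => hpos.
have := h m; move/(congr1 n2); rewrite !n2M !n2X !n2_prod.
set X := n2 (lam m - 'i%C); set Y := n2 (lam m + 'i%C).
have hXY : X < Y.
  rewrite /X /Y n2_minus n2_plus; nra.
have hX0 : 0 <= X by apply: n2_ge0.
have hA : forall l, l != m ->
    0 <= n2 (lam m - lam l - 'i%C) <= n2 (lam m - lam l + 'i%C).
  move=> l _; rewrite n2_ge0 /= n2_minus n2_plus.
  have := hm l isT; rewrite /= => hl.
  have hI : 0 <= complex.Im (lam m - lam l) by rewrite ImB subr_ge0.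
  nra.
have hB : 0 < \prod_(l < N | l != m) n2 (lam m - lam l + 'i%C).
  apply: prodr_gt0 => l _; rewrite n2_plus.
  have := hm l isT; rewrite /= => hl.
  have hI : 0 <= complex.Im (lam m - lam l) by rewrite ImB subr_ge0.
  by apply: ltr_wpDl; [exact: sqr_ge0 | rewrite exprn_gt0 //; lra].
have PAB := ler_prod (index_enum _) hA.
have XL : X ^+ L < Y ^+ L by rewrite ltrXn2r // -lt0n.
move=> e.
have : X ^+ L * \prod_(l < N | l != m) n2 (lam m - lam l - 'i%C) <
       Y ^+ L * \prod_(l < N | l != m) n2 (lam m - lam l + 'i%C).
  apply: le_lt_trans (_ : X ^+ L * \prod_(l < N | l != m) n2 (lam m - lam l + 'i%C) < _).
    by rewrite ler_wpM2l // exprn_ge0.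
  by rewrite ltr_pM2r.
by rewrite e ltxx.
Qed.

Lemma conj_i (R : realType) : ('i%C : R[i])^*%C = - 'i%C.
Proof. by apply/eqP; rewrite eq_complex /= oppr0 !eqxx. Qed.

Lemma bethe_conj {R : realType} {L N : nat} {lam : 'I_N -> R[i]} :
  bethe_eqs L lam -> bethe_eqs L (fun k => (lam k)^*%C).
Proof.
move=> h k; have := congr1 conjc (h k).
rewrite !rmorphM !rmorphXn !rmorph_prod /=.
have cm : forall z : R[i], (z - 'i%C)^*%C = conjc z + 'i%C.
  by case=> a b; apply/eqP; rewrite eq_complex /=; apply/andP; split; apply/eqP; ring.
have cp : forall z : R[i], (z + 'i%C)^*%C = conjc z - 'i%C.
  by case=> a b; apply/eqP; rewrite eq_complex /=; apply/andP; split; apply/eqP; ring.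
have cB : forall z w : R[i], (z - w)^*%C = conjc z - conjc w.
  by case=> a b [c d]; apply/eqP; rewrite eq_complex /=; apply/andP; split; apply/eqP; ring.
have P1 : \prod_(l < N | l != k) (lam k - lam l - 'i%C)^*%C =
    \prod_(l < N | l != k) ((lam k)^*%C - (lam l)^*%C + 'i%C).
  by apply: eq_bigr => l _; rewrite cm cB.
have P2 : \prod_(l < N | l != k) (lam k - lam l + 'i%C)^*%C =
    \prod_(l < N | l != k) ((lam k)^*%C - (lam l)^*%C - 'i%C).
  by apply: eq_bigr => l _; rewrite cp cB.
by rewrite cm cp P1 P2 => e; rewrite e.
Qed.


Lemma part1 {R : realType} {L N : nat} (hL : (0 < L)%N) {lam : 'I_N -> R[i]} :
  bethe_eqs L lam -> forall k, complex.Im (lam k) = 0.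
Proof.
move=> h k; apply: le_anti; rewrite (im_le0 hL h) /=.
have := im_le0 hL (bethe_conj h) k.
by case: (lam k) => a b /=; rewrite lerNl oppr0.
Qed.

Lemma part3 {R : realType} {L N : nat} (hL : (0 < L)%N) (hLe : ~~ odd L)
    (hN : (0 < N)%N) {I : 'I_N -> R} :
  (forall k, bethe_number N (I k)) -> injective I ->
  (forall k, - ((L + N - 1)%:R / 2) < I k /\ I k < (L + N - 1)%:R / 2) ->
  exists! lam : 'I_N -> R, injective lam /\ log_bethe_eqs L lam I.
Proof.
move=> hb hIinj hbd.
set h : R := (L + N - 1)%:R / 2.
have [v hv] := choice (fun l => bethe_nat hLe hN (hb l) (hbd l).1).
have hI : forall l, I l = (v l)%:R - h by move=> l; case: (hv l).
have hv1 : forall l, (1 <= v l)%N by move=> l; case: (hv l).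
have hinj : injective v.
  by move=> j k e; apply: hIinj; rewrite !hI e.
have hLN : ((L + N - 1)%:R : R) = L%:R + N%:R - 1.
  by rewrite natrB ?natrD // addn_gt0 hL.
have hv2 : forall l, (v l)%:R + 2 <= L%:R + N%:R :> R.
  move=> l; have := (hbd l).2; rewrite hI /h => hlt.
  have : (v l)%:R < (L + N - 1)%:R :> R by lra.
  rewrite ltr_nat => hn.
  have : (v l + 2 <= L + N)%N by lia.
  by rewrite -(ler_nat R) !natrD.
have e0 : (0 : R) < ((L + N)%:R)^-1 by rewrite invr_gt0 ltr0n addn_gt0 hL.
have e1 : ((L + N)%:R : R)^-1 < 1.
  have LN2 : (1 : R) < (L + N)%:R by rewrite (ltr_nat R 1); lia.
  by rewrite invf_lt1 // (lt_trans ltr01 LN2).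
have [D [hD1 [hDp hDn]]] := atan_big e0 e1.
pose a := fun l => D * ((v l)%:R - (L + N)%:R).
pose b := fun l => D * ((v l)%:R + 1).
have [x hx] : exists x : 'I_N -> R, forall k, Gf L k (x k) x = I k.
  apply: (@tarski_exists R N (fun k t x => Gf L k t x) I a b).
  - by move=> k t t' y; apply: G_lt_t.
  - by move=> k t y z; apply: G_le_x.
  - by move=> k y; apply: G_cont.
  - move=> l; rewrite /a /b ler_wpM2l ?(le_trans ler01 hD1) // lerD2l.
    by apply: le_trans (_ : 0 <= 1); rewrite ?ler01 // lerNl oppr0 ler0n.
  - by move=> k; rewrite hI; apply: (sub_bound hL hN hinj hv1 hv2 hD1 hDn).
  - by move=> k; rewrite hI; apply: (sup_bound hL hN hinj hv2 hD1 hDp).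
exists x; split.
  split; last by apply/(log_bethe_G hL).
  move=> j k e; apply: hIinj; rewrite -!hx !G_full e.
  by congr (_ + _ * _); apply: eq_bigr => l _; rewrite e.
move=> y [_ /(log_bethe_G hL) hy]; apply: (F_unique hL) => k.
by rewrite hx hy.
Qed.

Theorem proposition1 (R : realType) (L N : nat) (hL : (0 < L)%N) (hLe : ~~ odd L)
    (hN : (0 < N)%N) :
  (* (i) every solution with pairwise distinct roots is real *)
  (forall lam : 'I_N -> R[i], injective lam -> bethe_eqs L lam ->
     forall k, complex.Im (lam k) = 0)
  /\
  (* (ii) real solutions with distinct roots have distinct Bethe numbers in range *)
  (forall (lam : 'I_N -> R) (I : 'I_N -> R),
     injective lam -> (forall k, bethe_number N (I k)) -> log_bethe_eqs L lam I ->
     injective I /\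
     (forall k, - ((L + N - 1)%:R / 2) < I k /\ I k < (L + N - 1)%:R / 2))
  /\
  (* (iii) each admissible choice of distinct Bethe numbers gives exactly one solution *)
  (forall I : 'I_N -> R,
     (forall k, bethe_number N (I k)) -> injective I ->
     (forall k, - ((L + N - 1)%:R / 2) < I k /\ I k < (L + N - 1)%:R / 2) ->
     exists! lam : 'I_N -> R, injective lam /\ log_bethe_eqs L lam I).

Proof.
split; first by move=> lam _ h; exact: (part1 hL h).
split; first by move=> lam I hinj _ h; exact: (part2 hL hN hinj h).
by move=> I hb hinj hbd; exact: (part3 hL hLe hN hb hinj hbd).
Qed.
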